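(* Consider Method 1.3 (described in the context) for finding $p^*=\Pr(y,D)$, the Euclidean projection of a given point $y\in\mathbb{R}^n$ onto $D$. Suppose the method does not terminate. Then every limit point of the sequence $\{p_k\}_{k\in K}$ equals $p^*$; and if $\|p_{k+1}-y\|\ge\|p_k-y\|$ for all $k\in K$, then $p_k\to p^*$.
   Context: Setting: $D''\subset\mathbb{R}^n$ closed convex; $f_j$, $j\in J=\{1,\dots,m\}$, convex on $\mathbb{R}^n$ with $D_j=\{x:f_j(x)\le0\}$ having nonempty interior; $D'=\{x:f_j(x)\le0\ \forall j\}$; $D=D'\cap D''\ne\emptyset$. Notation: $K=\{0,1,\dots\}$, $F=\max_jf_j$, $D'_\varepsilon=\{x:F(x)\le\varepsilon\}$, $\Pr(y,S)$ is the projection of $y$ onto the closed convex set $S$, $W^1(x,D_j)=\{a:\|a\|=1,\ \langle a,z-x\rangle\le0\ \forall z\in D_j\}$. Method 1.3: choose $v^j\in\operatorname{int}D_j$, a sequence $\varepsilon_k>0$ with $\varepsilon_k\to0$, and a constant $q\ge1$; set $k=i=0$, $M_0=\mathbb{R}^n$, $y_0=\Pr(y,D'')$. Step 1: $J_i=\{j:y_i\notin D_j\}$; if empty, stop. Step 2: if $y_i\notin D'_{\varepsilon_k}$ set $Q_i=M_i$; otherwise set $i_k=i$, $p_k=y_{i_k}$, $Q_i=\mathbb{R}^n$, $k\leftarrow k+1$. Step 3: for $j\in J_i$ choose $z_i^j\in(v^j,y_i)$ with $z_i^j\notin\operatorname{int}D_j$ and $y_i+q_i^j(z_i^j-y_i)\in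 D_j$ for some $q_i^j\in[1,q]$; for $j\notin J_i$, $z_i^j=y_i$. Step 4: find $j_i\in J_i$ with $\|y_i-z_i^{j_i}\|=\max_{j\in J_i}\|y_i-z_i^j\|$. Step 5: choose $a_i\in W^1(z_i^{j_i},D_{j_i})$ and set $M_{i+1}=Q_i\cap\{x:\langle a_i,x-z_i^{j_i}\rangle\le0\}$. Step 6: $y_{i+1}=\Pr(y,M_{i+1}\cap D'')$; $i\leftarrow i+1$; go to Step 1. *)

(* Defs.v *)
(* R^n is represented by row vectors 'rV[R]_n,
   R : realType, with the (library) product topology, which coincides with
   the Euclidean topology; the Euclidean inner product / norm are defined below. *)
From HB Require Import structures.
From mathcomp Require Import all_boot all_order all_algebra.
From mathcomp Require Import all_classical all_reals all_analysis.
Set Implicit Arguments. Unset Strict Implicit. Unset Printing Implicit Defensive.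
Import Order.TTheory GRing.Theory Num.Theory.
Import numFieldNormedType.Exports.
Local Open Scope classical_set_scope.
Local Open Scope ring_scope.

Definition edot (R : realType) (n : nat) (u v : 'rV[R]_n) : R :=
  \sum_(i < n) u ord0 i * v ord0 i.
Definition enorm (R : realType) (n : nat) (u : 'rV[R]_n) : R :=
  Num.sqrt (edot u u).

Definition convex_setR (R : realType) (n : nat) (S : set 'rV[R]_n) : Prop :=
  forall x z (t : R), S x -> S z -> 0 <= t <= 1 -> S (t *: x + (1 - t) *: z).
Definition convex_funR (R : realType) (n : nat) (g : 'rV[R]_n -> R) : Prop :=
  forall x z (t : R), 0 <= t <= 1 ->
    g (t *: x + (1 - t) *: z) <= t * g x + (1 - t) * g z.

(* D_j = {x : f_j x <= 0};  D' = {x : f_j x <= 0 for all j};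
   D'_eps = {x : F x <= eps} with F = max_j f_j, i.e. {x : f_j x <= eps for all j} *)
Definition sublevel (R : realType) (n : nat) (g : 'rV[R]_n -> R) : set 'rV[R]_n :=
  [set x | g x <= 0].
Definition Dprime_eps (R : realType) (n m : nat) (f : 'I_m -> 'rV[R]_n -> R)
  (e : R) : set 'rV[R]_n := [set x | forall j, f j x <= e].
Definition Dprime (R : realType) (n m : nat) (f : 'I_m -> 'rV[R]_n -> R) :=
  Dprime_eps f 0.

Definition is_proj (R : realType) (n : nat) (y : 'rV[R]_n) (S : set 'rV[R]_n)
  (p : 'rV[R]_n) : Prop :=
  S p /\ forall z, S z -> enorm (y - p) <= enorm (y - z).

Definition W1 (R : realType) (n : nat) (x : 'rV[R]_n) (S : set 'rV[R]_n) :
  set 'rV[R]_n :=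
  [set a | enorm a = 1 /\ forall z, S z -> edot a (z - x) <= 0].

Definition open_seg (R : realType) (n : nat) (v w : 'rV[R]_n) : set 'rV[R]_n :=
  [set z | exists t : R, 0 < t < 1 /\ z = (1 - t) *: v + t *: w].

(* Main.v *)
Require Import Defs.
From HB Require Import structures.
From mathcomp Require Import all_boot all_order all_algebra.
From mathcomp Require Import all_classical all_reals all_analysis.
Import Order.TTheory GRing.Theory Num.Theory.
Import numFieldNormedType.Exports.
Local Open Scope classical_set_scope.
Local Open Scope ring_scope.
From mathcomp Require Import ring lra.
Set Implicit Arguments. Unset Strict Implicit. Unset Printing Implicit Defensive.

Lemma edotC (R : realType) n (u v : 'rV[R]_n) : edot u v = edot v u.
Proof. by apply: eq_bigr => i _; rewrite mulrC. Qed.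

Lemma edotDl (R : realType) n (u w v : 'rV[R]_n) : edot (u + w) v = edot u v + edot w v.
Proof. by rewrite /edot -big_split; apply: eq_bigr => i _; rewrite mxE mulrDl. Qed.

Lemma edotZl (R : realType) n (c : R) (u v : 'rV[R]_n) : edot (c *: u) v = c * edot u v.
Proof. by rewrite /edot mulr_sumr; apply: eq_bigr => i _; rewrite mxE mulrA. Qed.

Lemma edotNl (R : realType) n (u v : 'rV[R]_n) : edot (- u) v = - edot u v.
Proof. by rewrite -scaleN1r edotZl mulN1r. Qed.

Lemma edotBl (R : realType) n (u w v : 'rV[R]_n) : edot (u - w) v = edot u v - edot w v.
Proof. by rewrite edotDl edotNl. Qed.

Lemma edotDr (R : realType) n (u w v : 'rV[R]_n) : edot v (u + w) = edot v u + edot v w.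
Proof. by rewrite edotC edotDl !(edotC v). Qed.

Lemma edotZr (R : realType) n (c : R) (u v : 'rV[R]_n) : edot v (c *: u) = c * edot v u.
Proof. by rewrite edotC edotZl edotC. Qed.

Lemma edotNr (R : realType) n (u v : 'rV[R]_n) : edot v (- u) = - edot v u.
Proof. by rewrite edotC edotNl edotC. Qed.

Lemma edotBr (R : realType) n (u w v : 'rV[R]_n) : edot v (u - w) = edot v u - edot v w.
Proof. by rewrite edotDr edotNr. Qed.

Lemma edot_ge0 (R : realType) n (u : 'rV[R]_n) : 0 <= edot u u.
Proof. by apply: sumr_ge0 => i _; rewrite -expr2 sqr_ge0. Qed.

Lemma edot_eq0 (R : realType) n (u : 'rV[R]_n) : edot u u = 0 -> u = 0.
Proof.
move=> /eqP; rewrite psumr_eq0; last by move=> i _; rewrite -expr2 sqr_ge0.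
move=> /allP H; apply/rowP => i; rewrite mxE.
have := H i (mem_index_enum _); rewrite /= mulf_eq0 orbb => /eqP ->//.
Qed.

Lemma edot_coord (R : realType) n (u : 'rV[R]_n) i : u ord0 i ^+ 2 <= edot u u.
Proof.
rewrite /edot (bigD1 i) //= -expr2 lerDl; apply: sumr_ge0 => j _.
by rewrite -expr2 sqr_ge0.
Qed.

Lemma enorm_sq (R : realType) n (u : 'rV[R]_n) : enorm u ^+ 2 = edot u u.
Proof. by rewrite sqr_sqrtr // edot_ge0. Qed.

Lemma enorm_ge0 (R : realType) n (u : 'rV[R]_n) : 0 <= enorm u.
Proof. exact: sqrtr_ge0. Qed.

Lemma enorm_leE (R : realType) n (u w : 'rV[R]_n) :
  (enorm u <= enorm w) = (edot u u <= edot w w).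
Proof. by rewrite /enorm ler_sqrt // edot_ge0. Qed.

Lemma d2D (R : realType) n (u v : 'rV[R]_n) :
  edot (u + v) (u + v) = edot u u + 2 * edot u v + edot v v.
Proof. rewrite !edotDl !edotDr (edotC v u); lra. Qed.

Lemma d2B (R : realType) n (u v : 'rV[R]_n) :
  edot (u - v) (u - v) = edot u u - 2 * edot u v + edot v v.
Proof. rewrite !edotBl !edotBr (edotC v u); lra. Qed.

Lemma d2N (R : realType) n (u : 'rV[R]_n) : edot (- u) (- u) = edot u u.
Proof. by rewrite edotNl edotNr opprK. Qed.

Lemma d2Z (R : realType) n (c : R) (u : 'rV[R]_n) :
  edot (c *: u) (c *: u) = c ^+ 2 * edot u u.
Proof. by rewrite edotZl edotZr mulrA expr2. Qed.

Lemma d2_sym (R : realType) n (u v : 'rV[R]_n) : edot (u - v) (u - v) = edot (v - u) (v - u).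
Proof. by rewrite -d2N opprB. Qed.

Lemma d2D_le (R : realType) n (u v : 'rV[R]_n) :
  edot (u + v) (u + v) <= 2 * edot u u + 2 * edot v v.
Proof.
have := edot_ge0 (u - v); rewrite d2B d2D; lra.
Qed.

Lemma amgm (R : realType) n (t : R) (u v : 'rV[R]_n) :
  2 * t * edot u v <= t ^+ 2 * edot u u + edot v v.
Proof.
have := edot_ge0 (t *: u - v); rewrite d2B d2Z edotZl; lra.
Qed.

Lemma dot_unit_sq (R : realType) n (a w : 'rV[R]_n) : edot a a = 1 ->
  edot a w ^+ 2 <= edot w w.
Proof.
move=> a1; have := edot_ge0 (w - edot a w *: a).
rewrite d2B d2Z edotZr a1 (edotC w a); lra.
Qed.

Ltac vec := apply/rowP => ?; rewrite !mxE; ring.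

Lemma proj_char (R : realType) n (y p w : 'rV[R]_n) (C : set 'rV[R]_n) :
  convex_setR C -> is_proj y C p -> C w -> edot (y - p) (w - p) <= 0.
Proof.
move=> cvC [Cp Hp] Cw; rewrite leNgt; apply/negP => c0.
have d0 : 0 <= edot (w - p) (w - p) by apply: edot_ge0.
move: c0 d0.
set c := edot (y - p) (w - p); set d := edot (w - p) (w - p) => c0 d0.
have cd0 : 0 < c + d by lra.
set t := c / (c + d).
have t0 : 0 <= t by rewrite divr_ge0 // ltW.
have t1 : t <= 1 by rewrite ler_pdivrMr // mul1r; lra.
have tcd : t * (c + d) = c by rewrite /t divfK // gt_eqF.
have Cz := cvC _ _ t Cw Cp (introT andP (conj t0 t1)).
have := Hp _ Cz; rewrite enorm_leE.
have -> : y - (t *: w + (1 - t) *: p) = (y - p) - t *: (w - p) by vec.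
rewrite (d2B (y - p)) d2Z edotZr -/c -/d.
have tpos : 0 < t by rewrite divr_gt0.
nra.
Qed.

Lemma proj_pyth (R : realType) n (y p w : 'rV[R]_n) (C : set 'rV[R]_n) :
  convex_setR C -> is_proj y C p -> C w ->
  edot (w - p) (w - p) <= edot (w - y) (w - y) - edot (p - y) (p - y).
Proof.
move=> cvC Hp Cw; have := proj_char cvC Hp Cw.
have -> : w - y = (w - p) + (p - y) by vec.
rewrite (d2D (w - p) (p - y)).
have -> : edot (w - p) (p - y) = - edot (y - p) (w - p).
  by rewrite edotC -edotNl opprB.
lra.
Qed.

Lemma proj_le (R : realType) n (y p w : 'rV[R]_n) (C : set 'rV[R]_n) :
  is_proj y C p -> C w -> edot (p - y) (p - y) <= edot (w - y) (w - y).
Proof.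
by move=> [_ Hp] Cw; have := Hp _ Cw; rewrite enorm_leE (d2_sym y p) (d2_sym y w).
Qed.

Lemma box_bound (R : realType) n (g : 'rV[R]_n -> R) (c : 'rV[R]_n) :
  convex_funR g -> forall k (r : R), 0 < r -> exists B : R, forall u : 'rV[R]_n,
    (forall i : 'I_n, (k <= i)%N -> u ord0 i = c ord0 i) ->
    (forall i, `|u ord0 i - c ord0 i| <= r) -> g u <= B.
Proof.
move=> cvg k; elim: k => [|k IH] r r0.
  exists (g c) => u Hu _.
  have -> : u = c by apply/rowP => i; apply: Hu.
  by [].
case: (ltnP k n) => [Hk|Hk]; last first.
  have [B HB] := IH r r0; exists B => u Hu Hr; apply: HB => // i ki.
  by move: (ltn_ord i); rewrite ltnNge (leq_trans Hk ki).
set ko := Ordinal Hk.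
have r20 : 0 < 2 * r by rewrite mulr_gt0.
have [B' HB'] := IH (2 * r) r20.
set ek : 'rV[R]_n := \row_i ((i == ko)%:R).
set Bp := g (c + (2 * r) *: ek); set Bm := g (c - (2 * r) *: ek).
exists (B' / 2 + (`|Bp| + `|Bm|) / 2) => u Hu Hr.
set u' : 'rV[R]_n := \row_i (if i == ko then c ord0 i else 2 * u ord0 i - c ord0 i).
have Hu' : g u' <= B'.
  apply: HB'.
  - move=> i ki; rewrite mxE; case: eqP => // /eqP ne.
    have ki' : (k < i)%N.
      by rewrite ltn_neqAle ki andbT; apply: contra ne => /eqP h; apply/eqP/val_inj.
    rewrite Hu //; ring.
  - move=> i; rewrite mxE; case: eqP => _.
      by rewrite subrr normr0 ltW.
    have -> : 2 * u ord0 i - c ord0 i - c ord0 i = 2 * (u ord0 i - c ord0 i) by ring.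
    by rewrite normrM ger0_norm // ler_pM2l // Hr.
set s := u ord0 ko - c ord0 ko.
have Hs : `|s| <= r := Hr ko.
set w := c + (2 * s) *: ek.
have Hw : g w <= `|Bp| + `|Bm|.
  set l := (s + r) / (2 * r).
  have l0 : 0 <= l by rewrite divr_ge0 ?(ltW r20) //; move: Hs; rewrite ler_norml; lra.
  have l1 : l <= 1 by rewrite ler_pdivrMr // mul1r; move: Hs; rewrite ler_norml; lra.
  have -> : w = l *: (c + (2 * r) *: ek) + (1 - l) *: (c - (2 * r) *: ek).
    apply/rowP => i; rewrite !mxE /l; field; lra.
  apply: le_trans (cvg _ _ _ (introT andP (conj l0 l1))) _.
  have := ler_norm Bp; have := ler_norm Bm; have := normr_ge0 Bp; have := normr_ge0 Bm.
  rewrite -/Bp -/Bm; nra.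
have -> : u = (1/2) *: u' + (1 - 1/2) *: w.
  by apply/rowP => i; rewrite !mxE /s; case: eqP => [->|_]; rewrite ?mxE /=; field.
have h0 : 0 <= 1 / 2 :> R by lra.
have h1 : 1 / 2 <= 1 :> R by lra.
have h12 := introT andP (conj h0 h1).
apply: le_trans (cvg _ _ _ h12) _; lra.
Qed.

Lemma ball_bound (R : realType) n (g : 'rV[R]_n -> R) (c : 'rV[R]_n) (rho : R) :
  convex_funR g -> exists B : R, 0 <= B /\ forall u : 'rV[R]_n,
    edot (u - c) (u - c) <= rho -> g u <= B.
Proof.
move=> cvg; have r0 : 0 < `|rho| + 1 by rewrite ltr_wpDl.
have [B HB] := box_bound c cvg n r0.
exists `|B|; split => // u Hu; apply: le_trans (ler_norm B).
apply: HB => [i|i]; first by rewrite leqNgt ltn_ord.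
have := edot_coord (u - c) i; rewrite !mxE => h.
have hr := ler_norm rho.
rewrite ler_norml; apply/andP; split; nra.
Qed.

Lemma conv_bound (R : realType) n (g : 'rV[R]_n -> R) (c x w : 'rV[R]_n) (B rho : R) :
  convex_funR g -> 0 <= B ->
  (forall u, edot (u - c) (u - c) <= 2 * rho + 2 -> g u <= B) ->
  edot (x - c) (x - c) <= rho -> edot (x - w) (x - w) <= 1 ->
  g x <= Num.max (g w) 0 + enorm (x - w) * B.
Proof.
move=> cvg B0 HB Hx Hxw.
have l0 := enorm_ge0 (x - w).
have l2 := enorm_sq (x - w).
set l := enorm (x - w) in l0 l2 *.
have l1 : l <= 1 by nra.
have hm1 : g w <= Num.max (g w) 0 by rewrite le_max lexx.
have hm2 : 0 <= Num.max (g w) 0 by rewrite le_max lexx orbT.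
have [le0|lpos] := eqVneq l 0.
  have : x - w = 0 by apply: edot_eq0; rewrite -l2 le0 expr2 mulr0.
  move/eqP; rewrite subr_eq0 => /eqP ->; rewrite le0 mul0r addr0 //.
set u := x + ((1 - l) / l) *: (x - w).
have Hu : edot (u - x) (u - x) <= 1.
  have -> : u - x = ((1 - l) / l) *: (x - w) by rewrite /u; vec.
  rewrite d2Z -l2 expr_div_n -mulrA mulVf ?mulr1; last by rewrite expf_neq0.
  nra.
have gu : g u <= B.
  apply: HB; have -> : u - c = (x - c) + (u - x) by vec.
  apply: le_trans (d2D_le _ _) _; lra.
have -> : x = l *: u + (1 - l) *: w.
  by apply/rowP => i; rewrite /u !mxE; field.
have hl : 0 <= l <= 1 by apply/andP.
apply: le_trans (cvg _ _ _ hl) _.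
nra.
Qed.

Lemma T1 (R : realType) n (x : 'rV[R]_n) (B : set 'rV[R]_n) :
  nbhs x B -> exists2 e : R, 0 < e & forall u : 'rV[R]_n, (forall i, `|x ord0 i - u ord0 i| < e) -> B u.
Proof.
move=> /nbhs_ballP [e e0 He]; exists e => // u Hu; apply: He.
rewrite -ball_normE /ball_ /=.
change (mx_norm (x - u) < e); rewrite mx_normrE; apply: bigmax_lt => // -[i j] _ /=.
by rewrite ord1 !mxE.
Qed.

Lemma T2 (R : realType) n (x : 'rV[R]_n) (P : set 'rV[R]_n) (e : R) : 0 < e ->
  (forall u : 'rV[R]_n, (forall i, `|x ord0 i - u ord0 i| < e) -> P u) -> nbhs x P.
Proof.
move=> e0 H; apply/nbhs_ballP; exists e => // u.
rewrite -ball_normE /ball_ /= => Hu; apply: H => i.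
apply: le_lt_trans Hu.
change (`|x ord0 i - u ord0 i| <= mx_norm (x - u)); rewrite mx_normrE.
have := (@le_bigmax _ _ _ 0 (fun ij : 'I_1 * 'I_n => `|(x - u) ij.1 ij.2|) (ord0, i)).
by rewrite /= !mxE.
Qed.

Lemma T1d (R : realType) n (x : 'rV[R]_n) (B : set 'rV[R]_n) :
  nbhs x B -> exists2 d : R, 0 < d & forall u, edot (u - x) (u - x) < d -> B u.
Proof.
move=> /T1 [e e0 He]; exists (e ^+ 2); first by rewrite exprn_gt0.
move=> u Hu; apply: He => i.
have := edot_coord (u - x) i; rewrite !mxE => h.
have h2 : (x ord0 i - u ord0 i) ^+ 2 < e ^+ 2.
  by apply: le_lt_trans Hu; rewrite -sqrrN opprB.
rewrite ltr_norml; apply/andP; split; nra.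
Qed.

Lemma T2d (R : realType) n (x : 'rV[R]_n) (d : R) : 0 < d ->
  nbhs x [set u | edot (u - x) (u - x) < d].
Proof.
move=> d0.
have nn : 0 <= n%:R :> R by [].
have dn : 0 < d + n%:R + 1 by lra.
set e := d / (d + n%:R + 1).
have e0 : 0 < e by rewrite divr_gt0.
have ed : e * (d + n%:R + 1) = d by rewrite /e divfK // gt_eqF.
apply: (T2 e0) => u Hu /=.
apply: (@le_lt_trans _ _ (\sum_(i < n) e ^+ 2)).
  apply: ler_sum => i _; rewrite !mxE -expr2.
  have := Hu i; rewrite -normrN opprB => h.
  rewrite -real_normK ?num_real // lerXn2r ?nnegrE ?normr_ge0 ?ltW //.
rewrite sumr_const card_ord -mulr_natl.
have e1 : e < 1 by rewrite /e ltr_pdivrMr // mul1r; lra.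
nra.
Qed.

Lemma cvg_d2 (R : realType) n (u : nat -> 'rV[R]_n) (x : 'rV[R]_n) :
  u @ \oo --> x -> forall d, 0 < d -> exists N, forall k, (N <= k)%N -> edot (u k - x) (u k - x) < d.
Proof.
move=> H d d0; have := H _ (T2d x d0); case => N _ HN; exists N => k Hk; exact: HN.
Qed.

Lemma d2_cvg (R : realType) n (u : nat -> 'rV[R]_n) (x : 'rV[R]_n) :
  (forall d, 0 < d -> exists N, forall k, (N <= k)%N -> edot (u k - x) (u k - x) < d) ->
  u @ \oo --> x.
Proof.
move=> H P /T1d [d d0 HP]; have [N HN] := H d d0; exists N => // k /= Hk.
exact/HP/HN.
Qed.

Lemma cluster_ex (R : realType) n (p : nat -> 'rV[R]_n) (c : 'rV[R]_n) (rho : R) :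
  (forall k, edot (p k - c) (p k - c) <= rho) ->
  exists x, forall d, 0 < d -> forall N, exists k, (N <= k)%N /\ edot (p k - x) (p k - x) < d.
Proof.
move=> Hb; set r := `|rho| + 1.
have r0 : 0 < r by rewrite ltr_wpDl.
have cA := @rV_compact R n (fun i => `[c ord0 i - r, c ord0 i + r]%classic)
  (fun i => @segment_compact R _ _).
have FA : (p @ \oo) [set v : 'rV[R]_n | forall i, `[c ord0 i - r, c ord0 i + r]%classic (v ord0 i)].
  exists 0%N => // k _ i /=; rewrite in_itv /=.
  have := edot_coord (p k - c) i; rewrite !mxE => h.
  have := Hb k; have hr := ler_norm rho; have hr0 := normr_ge0 rho; have rr : r = `|rho| + 1 by [].
  move=> hk; apply/andP; split; nra.
have [x [_ Hx]] := cA _ _ FA.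
exists x => d d0 N.
have FB : (p @ \oo) (p @` [set k | (N <= k)%N]) by exists N => // k /= Hk; exists k.
have [v [[k Hk <-] Hv]] := Hx _ _ FB (T2d x d0).
by exists k.
Qed.

Lemma arith1 (R : realType) (a w b R0 e T dl : R) : 0 < e -> 0 <= R0 -> 0 < T ->
  T * e = 4 * (R0 + 1) -> dl * (4 * (T + 1)) = e -> 0 <= a -> a <= dl -> 0 <= b -> b <= R0 ->
  T * w <= T ^+ 2 * a + b -> a + w <= e.
Proof.
move=> e0 R00 T0 HT Hdl a0 adl b0 bR Hw.
have h1 : T * (a + w) <= T * (T + 1) * a + b by nra.
have h2 : T * (T + 1) * a <= T * (T + 1) * dl by apply: ler_wpM2l => //; nra.
have h3 : T * (T + 1) * dl = T * e / 4 by rewrite -Hdl; field.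
have h4 : T * (a + w) <= T * e by nra.
by rewrite -(ler_pM2l T0).
Qed.

Lemma unit_coord (R : realType) n (a : 'rV[R]_n) i : edot a a = 1 -> `|a ord0 i| <= 1.
Proof.
move=> a1; have := edot_coord a i; rewrite a1 => h.
rewrite ler_norml; apply/andP; split; nra.
Qed.

Lemma enorm1 (R : realType) n (a : 'rV[R]_n) : enorm a = 1 -> edot a a = 1.
Proof. by move=> h; rewrite -enorm_sq h expr1n. Qed.

Lemma geo_step (R : realType) n (v yi yn z a : 'rV[R]_n) (S : set 'rV[R]_n) (r : R) :
  0 < r -> (forall u : 'rV[R]_n, (forall i, `|v ord0 i - u ord0 i| < r) -> S u) ->
  open_seg v yi z -> W1 z S a -> edot a (yn - z) <= 0 ->
  edot (yi - z) (yi - z) * r ^+ 2 <= 4 * edot (yi - yn) (yi - yn) * edot (yi - v) (yi - v).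
Proof.
move=> r0 HS [t [t01 ->]] [/enorm1 a1 Ha] Hn.
have /andP [t0 t1] := t01.
have Sw0 : S (v + (r / 2) *: a).
  apply: HS => i; rewrite !mxE.
  have -> : v ord0 i - (v ord0 i + r / 2 * a ord0 i) = - (r / 2 * a ord0 i) by ring.
  rewrite normrN normrM ger0_norm ?divr_ge0 ?ltW //.
  have := unit_coord i a1; have : 0 < r / 2 by rewrite divr_gt0.
  nra.
have h1 := Ha _ Sw0.
have eqq1 : v + (r / 2) *: a - ((1 - t) *: v + t *: yi) = (r / 2) *: a - t *: (yi - v) by vec.
rewrite eqq1 in h1.
rewrite edotBr !edotZr a1 in h1.
have eqq2 : yn - ((1 - t) *: v + t *: yi) = (yn - yi) + (1 - t) *: (yi - v) by vec.
rewrite eqq2 in Hn.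
rewrite edotDr edotZr in Hn.
have -> : yi - ((1 - t) *: v + t *: yi) = (1 - t) *: (yi - v) by vec.
rewrite d2Z.
have hs := dot_unit_sq (yi - yn) a1.
have eqq3 : edot a (yi - yn) = - edot a (yn - yi) by rewrite -edotNr opprB.
rewrite eqq3 in hs.
move: h1 Hn hs.
set aD := edot a (yi - v); set s := edot a (yn - yi); set dd := edot (yi - yn) (yi - yn).
move=> h1 Hn hs.
have hD := edot_ge0 (yi - v).
have aD0 : 0 < aD by nra.
have ms0 : 0 <= - s by nra.
have k1a : (1 - t) * r <= 2 * t * ((1 - t) * aD) by nra.
have k1b : t * ((1 - t) * aD) <= t * (- s) by nra.
have k1 : (1 - t) * r <= 2 * (- s) by nra.
have k0 : 0 <= (1 - t) * r by apply: mulr_ge0; lra.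
have k2 : ((1 - t) * r) ^+ 2 <= (2 * (- s)) ^+ 2 by rewrite lerXn2r // ?nnegrE //; lra.
have k3 : (1 - t) ^+ 2 * r ^+ 2 <= 4 * dd.
  apply: le_trans (_ : (2 * (- s)) ^+ 2 <= _); first by rewrite -exprMn.
  rewrite exprMn sqrrN; nra.
have := ler_wpM2r hD k3; nra.
Qed.

Lemma le_sum1 (R : realType) m (F : 'I_m -> R) j : (forall i, 0 <= F i) -> F j <= \sum_i F i.
Proof. by move=> H; rewrite (bigD1 j) //= lerDl; apply: sumr_ge0 => i _. Qed.

Lemma sq_le (R : realType) (X e : R) : 0 <= X -> 0 < e -> X ^+ 2 <= e ^+ 2 -> X <= e.
Proof. rewrite !expr2 => X0 e0 h; nra. Qed.

Unset Implicit Arguments. Set Strict Implicit.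

Theorem theorem1p3p1
  (R : realType) (n m : nat)
  (D2 : set 'rV[R]_n) (f : 'I_m -> 'rV[R]_n -> R) (y : 'rV[R]_n)
  (* data of Method 1.3 *)
  (v : 'I_m -> 'rV[R]_n) (eps : nat -> R) (q : R)
  (* a non-terminating run of Method 1.3 *)
  (yy : nat -> 'rV[R]_n) (M Q : nat -> set 'rV[R]_n) (kc : nat -> nat)
  (z : nat -> 'I_m -> 'rV[R]_n) (qq : nat -> 'I_m -> R)
  (jj : nat -> 'I_m) (a : nat -> 'rV[R]_n)
  (pstar : 'rV[R]_n) :
  (* standing assumptions *)
  closed D2 -> convex_setR D2 ->
  (forall j, convex_funR (f j)) ->
  (forall j, exists x, interior (sublevel (f j)) x) ->
  (exists x, (Dprime f `&` D2) x) ->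
  (* p* = Pr(y, D) *)
  is_proj y (Dprime f `&` D2) pstar ->
  (* parameters *)
  (forall j, interior (sublevel (f j)) (v j)) ->
  (forall k, 0 < eps k) -> eps @ \oo --> (0 : R) ->
  1 <= q ->
  (* initialisation: k = i = 0, M_0 = R^n, y_0 = Pr(y, D'') *)
  kc 0%N = 0%N -> M 0%N = setT -> is_proj y D2 (yy 0%N) ->
  (* Step 1, never stops: J_i is nonempty *)
  (forall i, exists j, ~ sublevel (f j) (yy i)) ->
  (* Step 2 *)
  (forall i, ~ Dprime_eps f (eps (kc i)) (yy i) ->
     Q i = M i /\ kc i.+1 = kc i) ->
  (forall i, Dprime_eps f (eps (kc i)) (yy i) ->
     Q i = setT /\ kc i.+1 = (kc i).+1) ->
  (* Step 3 *)
  (forall i j, ~ sublevel (f j) (yy i) ->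
     [/\ open_seg (v j) (yy i) (z i j), ~ interior (sublevel (f j)) (z i j),
         1 <= qq i j <= q &
         sublevel (f j) (yy i + qq i j *: (z i j - yy i))]) ->
  (forall i j, sublevel (f j) (yy i) -> z i j = yy i) ->
  (* Step 4 *)
  (forall i, ~ sublevel (f (jj i)) (yy i) /\
     forall j, ~ sublevel (f j) (yy i) ->
       enorm (yy i - z i j) <= enorm (yy i - z i (jj i))) ->
  (* Step 5 *)
  (forall i, W1 (z i (jj i)) (sublevel (f (jj i))) (a i)) ->
  (forall i, M i.+1 = Q i `&` [set x | edot (a i) (x - z i (jj i)) <= 0]) ->
  (* Step 6 *)
  (forall i, is_proj y (M i.+1 `&` D2) (yy i.+1)) ->
  (* conclusion: the points p_k = y_{i_k} are defined for every k in K, every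
     limit point of (p_k) is p*, and under monotonicity p_k -> p* *)
  exists ik : nat -> nat,
    (forall k, (ik k < ik k.+1)%N) /\
    (forall k, Dprime_eps f (eps (kc (ik k))) (yy (ik k)) /\ kc (ik k) = k) /\
    (forall x : 'rV[R]_n, (exists phi : nat -> nat,
         (forall l, (phi l < phi l.+1)%N) /\
         (fun l => yy (ik (phi l))) @ \oo --> x) -> x = pstar) /\
    ((forall k, enorm (yy (ik k) - y) <= enorm (yy (ik k.+1) - y)) ->
       (fun k => yy (ik k)) @ \oo --> pstar).
Proof.
move=> cD2 cvD2 cvf _ _ Hps Hv eps0 epscvg q1 kc0 M0 Hy0 Hnt Hs2a Hs2b Hs3 Hs3' Hs4 Hs5 HM Hy.
set D := Dprime f `&` D2.
set reset := fun i => Dprime_eps f (eps (kc i)) (yy i).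
have cvD : convex_setR D.
  move=> x w t [Dx D2x] [Dw D2w] t01; split; last exact: cvD2.
  move=> j; have /andP [t0 t1] := t01.
  apply: le_trans (cvf j _ _ _ t01) _.
  have := Dx j; have := Dw j; nra.
have cvH : forall (b c : 'rV[R]_n), convex_setR [set x | edot b (x - c) <= 0].
  move=> b c x w t /= Hx Hw /andP [t0 t1].
  have -> : t *: x + (1 - t) *: w - c = t *: (x - c) + (1 - t) *: (w - c) by vec.
  rewrite edotDr !edotZr; nra.
have cvM : forall i, convex_setR (M i).
  elim => [|i IH]; first by rewrite M0 => *.
  rewrite HM => x w t [Qx Hx] [Qw Hw] t01; split; last exact: cvH.
  have [Hr|Hr] := pselect (reset i).
    by rewrite (proj1 (Hs2b _ Hr)).
  by rewrite (proj1 (Hs2a _ Hr)) in Qx Qw *; apply: IH.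
have DM : forall i, D `<=` M i.
  elim => [|i IH]; first by rewrite M0.
  move=> x Dx; rewrite HM; split.
    have [Hr|Hr] := pselect (reset i).
      by rewrite (proj1 (Hs2b _ Hr)).
    by rewrite (proj1 (Hs2a _ Hr)); apply: IH.
  have [_ Ha] := Hs5 i; apply: Ha; exact: (proj1 Dx).
set C := fun i => M i `&` D2.
have HC : forall i, is_proj y (C i) (yy i).
  case => [|i]; last exact: Hy.
  by rewrite /C M0 setTI.
have cvC : forall i, convex_setR (C i).
  move=> i x w t [Mx D2x] [Mw D2w] t01; split; [exact: cvM|exact: cvD2].
have DC : forall i, C i pstar.
  by move=> i; have [[Dp D2p] _] := Hps; split => //; apply: DM.
set R0 := edot (pstar - y) (pstar - y).
have R00 : 0 <= R0 by apply: edot_ge0.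
have bnd : forall i, edot (yy i - y) (yy i - y) <= R0.
  by move=> i; apply: proj_le (HC i) (DC i).
have D2yy : forall i, D2 (yy i) by move=> i; have [[]] := HC i.
have Myy : forall i, M i.+1 (yy i.+1) by move=> i; have [[]] := HC i.+1.
have step : forall i, ~ reset i ->
    edot (yy i.+1 - yy i) (yy i.+1 - yy i) <=
    edot (yy i.+1 - y) (yy i.+1 - y) - edot (yy i - y) (yy i - y).
  move=> i Hr; apply: proj_pyth (cvC i) (HC i) _.
  have [Mn D2n] : C i.+1 (yy i.+1) by have [] := HC i.+1.
  split => //; move: Mn; rewrite HM (proj1 (Hs2a _ Hr)); by case.
have key : forall i0, exists i, (i0 <= i)%N /\ reset i.
  move=> i0; have [//|Hno] := pselect (exists i, (i0 <= i)%N /\ reset i); exfalso.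
  have nr : forall i, (i0 <= i)%N -> ~ reset i by move=> i hi hr; apply: Hno; exists i.
  have kcc : forall d, kc (i0 + d)%N = kc i0.
    elim => [|d IH]; first by rewrite addn0.
    by rewrite addnS (proj2 (Hs2a _ (nr _ (leq_addr _ _)))) IH.
  set e := eps (kc i0); have e0 : 0 < e := eps0 _.
  have Hr : forall j, exists r : R, 0 < r /\ forall u : 'rV[R]_n,
      (forall i, `|v j ord0 i - u ord0 i| < r) -> sublevel (f j) u.
    by move=> j; have [r r0 Hr] := T1 (Hv j); exists r.
  pose rj j := proj1_sig (cid (Hr j)).
  have rjP : forall j, 0 < rj j /\ forall u : 'rV[R]_n,
      (forall i, `|v j ord0 i - u ord0 i| < rj j) -> sublevel (f j) u.
    by move=> j; exact: (proj2_sig (cid (Hr j))).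
  have Hb : forall j, exists B : R, 0 <= B /\ forall u,
      edot (u - y) (u - y) <= 2 * R0 + 2 -> f j u <= B.
    by move=> j; exact: ball_bound.
  pose Bj j := proj1_sig (cid (Hb j)).
  have BjP : forall j, 0 <= Bj j /\ forall u,
      edot (u - y) (u - y) <= 2 * R0 + 2 -> f j u <= Bj j.
    by move=> j; exact: (proj2_sig (cid (Hb j))).
  set Kt := fun j => 4 / rj j ^+ 2 * (2 * R0 + 2 * edot (y - v j) (y - v j)).
  have Kt0 : forall j, 0 <= Kt j.
    move=> j; apply: mulr_ge0; first by rewrite divr_ge0 // sqr_ge0.
    by have := edot_ge0 (y - v j); lra.
  set K := \sum_j Kt j.
  have KK : forall j, Kt j <= K by move=> j; exact: le_sum1.
  have K0 : 0 <= K by apply: sumr_ge0 => j _.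
  set BB := \sum_j Bj j.
  have BBj : forall j, Bj j <= BB by move=> j; apply: le_sum1 => i; case: (BjP i).
  have BB0 : 0 <= BB by apply: sumr_ge0 => j _; case: (BjP j).
  have den0 : 0 < BB ^+ 2 + e ^+ 2 + 1 by have := sqr_ge0 BB; have := sqr_ge0 e; lra.
  set eta := e ^+ 2 / (BB ^+ 2 + e ^+ 2 + 1).
  have etaE : eta * (BB ^+ 2 + e ^+ 2 + 1) = e ^+ 2 by rewrite /eta divfK // gt_eqF.
  have eta0 : 0 < eta by rewrite divr_gt0 // exprn_gt0.
  have qK0 : 0 < q ^+ 2 * K + 1 by have := sqr_ge0 q; nra.
  set dl := eta / (q ^+ 2 * K + 1).
  have dlE : dl * (q ^+ 2 * K + 1) = eta by rewrite /dl divfK // gt_eqF.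
  have dl0 : 0 < dl by rewrite divr_gt0.
  have [i [ii0 Hi]] : exists i, (i0 <= i)%N /\
      edot (yy i.+1 - yy i) (yy i.+1 - yy i) < dl.
    have [//|Hno2] := pselect (exists i, (i0 <= i)%N /\
      edot (yy i.+1 - yy i) (yy i.+1 - yy i) < dl); exfalso.
    have big : forall N, N%:R * dl <=
        edot (yy (i0 + N)%N - y) (yy (i0 + N)%N - y) - edot (yy i0 - y) (yy i0 - y).
      elim => [|N IH]; first by rewrite addn0 mul0r subrr.
      have hN : dl <= edot (yy (i0 + N)%N.+1 - yy (i0 + N)%N) (yy (i0 + N)%N.+1 - yy (i0 + N)%N).
        rewrite leNgt; apply/negP => h; apply: Hno2; exists (i0 + N)%N; split => //.
        exact: leq_addr.
      have := step (i0 + N)%N (nr _ (leq_addr N i0)).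
      have -> : N.+1%:R * dl = N%:R * dl + dl by rewrite -addn1 natrD mulrDl mul1r.
      rewrite addnS; lra.
    have hb := archi_boundP (divr_ge0 R00 (ltW dl0)).
    set N := Num.Def.archi_bound (R0 / dl) in hb.
    have := big N; have := bnd (i0 + N)%N; have := edot_ge0 (yy i0 - y).
    have : R0 < N%:R * dl by rewrite -ltr_pdivrMr.
    lra.
  apply: (nr i ii0) => j.
  have -> : kc i = kc i0 by rewrite -(subnKC ii0) kcc.
  have [Hs|Hs] := pselect (sublevel (f j) (yy i)); first by apply: le_trans Hs (ltW e0).
  have [Hnj Hmax] := Hs4 i.
  have Hhalf : edot (a i) (yy i.+1 - z i (jj i)) <= 0.
    by have := Myy i; rewrite HM; case.
  have [seg _ _ _] := Hs3 i (jj i) Hnj.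
  have g1 := geo_step (proj1 (rjP (jj i))) (proj2 (rjP (jj i))) seg (Hs5 i) Hhalf.
  have hv : edot (yy i - v (jj i)) (yy i - v (jj i)) <= 2 * R0 + 2 * edot (y - v (jj i)) (y - v (jj i)).
    have -> : yy i - v (jj i) = (yy i - y) + (y - v (jj i)) by vec.
    apply: le_trans (d2D_le _ _) _; have := bnd i; lra.
  have hz : edot (yy i - z i (jj i)) (yy i - z i (jj i)) <=
      Kt (jj i) * edot (yy i.+1 - yy i) (yy i.+1 - yy i).
    have r0 := proj1 (rjP (jj i)).
    have r20 : 0 < rj (jj i) ^+ 2 by rewrite exprn_gt0.
    rewrite -(ler_pM2r r20) /Kt.
    have -> : 4 / rj (jj i) ^+ 2 * (2 * R0 + 2 * edot (y - v (jj i)) (y - v (jj i))) *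
      edot (yy i.+1 - yy i) (yy i.+1 - yy i) * rj (jj i) ^+ 2 =
      4 * edot (yy i.+1 - yy i) (yy i.+1 - yy i) * (2 * R0 + 2 * edot (y - v (jj i)) (y - v (jj i))).
      by field; rewrite gt_eqF.
    apply: le_trans g1 _; rewrite (d2_sym (yy i)).
    apply: ler_wpM2l => //; apply: mulr_ge0 => //; exact: edot_ge0.
  have hzj : edot (yy i - z i j) (yy i - z i j) <= edot (yy i - z i (jj i)) (yy i - z i (jj i)).
    by rewrite -enorm_leE; apply: Hmax.
  have [_ _ /andP [qq1 qq2] Sw] := Hs3 i j Hs.
  set w := yy i + qq i j *: (z i j - yy i) in Sw.
  have hw : edot (yy i - w) (yy i - w) <= eta.
    have -> : yy i - w = qq i j *: (yy i - z i j) by rewrite /w; vec.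
    rewrite d2Z.
    have hst := edot_ge0 (yy i.+1 - yy i).
    have hq : qq i j ^+ 2 <= q ^+ 2 by rewrite lerXn2r ?nnegrE //; lra.
    have h1 : edot (yy i - z i j) (yy i - z i j) <= K * dl.
      apply: le_trans hzj _; apply: le_trans hz _.
      apply: le_trans (_ : K * edot (yy i.+1 - yy i) (yy i.+1 - yy i) <= _).
        by apply: ler_wpM2r.
      by apply: ler_wpM2l => //; apply: ltW.
    have hzz := edot_ge0 (yy i - z i j).
    have : q ^+ 2 * (K * dl) <= eta by nra.
    have := sqr_ge0 (qq i j); nra.
  have [Bj0 HBj] := BjP j.
  have hw1 : edot (yy i - w) (yy i - w) <= 1 by nra.
  have cb := conv_bound (cvf j) Bj0 HBj (bnd i) hw1.
  have emax : Num.max (f j w) 0 = 0 by apply/max_idPr.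
  rewrite emax in cb.
  apply: le_trans cb _; rewrite add0r.
  have l0 := enorm_ge0 (yy i - w); have l2 := enorm_sq (yy i - w).
  have hBB := BBj j.
  have : (enorm (yy i - w) * Bj j) ^+ 2 <= e ^+ 2.
    rewrite exprMn l2; apply: le_trans (_ : eta * BB ^+ 2 <= _).
      apply: le_trans (_ : eta * Bj j ^+ 2 <= _); first by apply: ler_wpM2r => //; apply: sqr_ge0.
      by apply: ler_wpM2l; [apply: ltW | rewrite lerXn2r ?nnegrE].
    have := sqr_ge0 e; have := sqr_ge0 BB; nra.
  have X0 : 0 <= enorm (yy i - w) * Bj j by apply: mulr_ge0.
  by move=> h; apply: sq_le.
have nxt : forall d i0, reset (i0 + d)%N -> exists i, (i0 <= i)%N /\ reset i /\ kc i = kc i0.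
  elim => [|d IH] i0 Hr; first by exists i0; rewrite addn0 in Hr.
  have [Hr0|Hr0] := pselect (reset i0); first by exists i0.
  rewrite -addSnnS in Hr.
  have [i [h1 [h2 h3]]] := IH i0.+1 Hr.
  exists i; split; first exact: ltnW.
  by split => //; rewrite h3 (proj2 (Hs2a _ Hr0)).
have nxt2 : forall i0, exists i, (i0 <= i)%N /\ reset i /\ kc i = kc i0.
  by move=> i0; have [i [hi Hr]] := key i0; apply: (nxt (i - i0)%N); rewrite subnKC.
pose nx i0 := proj1_sig (cid (nxt2 i0)).
have nxP : forall i0, (i0 <= nx i0)%N /\ reset (nx i0) /\ kc (nx i0) = kc i0.
  by move=> i0; exact: (proj2_sig (cid (nxt2 i0))).
pose ik := fix ik k := if k is k'.+1 then nx (ik k').+1 else nx 0%N.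
have ikS : forall k, ik k.+1 = nx (ik k).+1 by [].
have ik0 : ik 0%N = nx 0%N by [].
have ikP : forall k, reset (ik k) /\ kc (ik k) = k.
  elim => [|k [Hr Hk]]; first by rewrite ik0; have [_ [? ->]] := nxP 0%N.
  rewrite ikS; have [_ [? ->]] := nxP (ik k).+1; split => //.
  by rewrite (proj2 (Hs2b _ Hr)) Hk.
exists ik; split.
  by move=> k; rewrite ikS; exact: (proj1 (nxP _)).
split; first exact: ikP.
set p := fun k => yy (ik k).
have pD2 : forall k, D2 (p k) by move=> k; apply: D2yy.
have pb : forall k, edot (p k - y) (p k - y) <= R0 by move=> k; apply: bnd.
have pf : forall k j, f j (p k) <= eps k.
  by move=> k j; have [Hr Hk] := ikP k; have := Hr j; rewrite Hk.
have LP : forall x, (forall d, 0 < d -> forall N, exists k, (N <= k)%N /\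
    edot (p k - x) (p k - x) < d) -> x = pstar.
  move=> x Hx.
  have Dx2 : D2 x.
    apply: (cD2 x) => B /T1d [d d0 HB]; have [k [_ hk]] := Hx d d0 0%N.
    by rewrite /nonempty; exists (p k); split; [exact: pD2 | exact: HB].
  have hxy : edot (x - y) (x - y) <= 2 * R0 + 2.
    have [kk [_ hk]] := Hx 1 ltr01 0%N.
    have -> : x - y = (x - p kk) + (p kk - y) by vec.
    apply: le_trans (d2D_le _ _) _; rewrite (d2_sym x); have := pb kk; lra.
  have Dx : Dprime f x.
    move=> j; apply/ler_addgt0Pr => e' e0; rewrite add0r.
    have [B [B0 HB]] := ball_bound y (2 * (2 * R0 + 2) + 2) (cvf j).
    have e2 : 0 < e' / 2 by rewrite divr_gt0.
    have := (cvgrPdist_lt _ _).1 epscvg _ e2; case => N _ HN.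
    have den0 : 0 < B ^+ 2 + (e' / 2) ^+ 2 + 1 by have := sqr_ge0 B; have := sqr_ge0 (e' / 2); lra.
    set eta := (e' / 2) ^+ 2 / (B ^+ 2 + (e' / 2) ^+ 2 + 1).
    have etaE : eta * (B ^+ 2 + (e' / 2) ^+ 2 + 1) = (e' / 2) ^+ 2 by rewrite /eta divfK // gt_eqF.
    have eta0 : 0 < eta by rewrite divr_gt0 // exprn_gt0.
    have [k [kN hk]] := Hx eta eta0 N.
    rewrite d2_sym in hk.
    have hk1 : edot (x - p k) (x - p k) <= 1.
      have := sqr_ge0 B; have := sqr_ge0 (e' / 2); nra.
    have cb := conv_bound (cvf j) B0 HB hxy hk1.
    apply: le_trans cb _.
    have hm : Num.max (f j (p k)) 0 <= e' / 2.
      rewrite ge_max (ltW e2) andbT; apply: le_trans (pf k j) _.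
      have := HN k kN; rewrite /= sub0r normrN => h.
      exact: ltW (le_lt_trans (ler_norm _) h).
    have hn : enorm (x - p k) * B <= e' / 2.
      apply: sq_le => //; first by apply: mulr_ge0 => //; apply: enorm_ge0.
      rewrite exprMn enorm_sq.
      have := sqr_ge0 B; have := sqr_ge0 (e' / 2); have := edot_ge0 (x - p k); nra.
    lra.
  have hxy2 : edot (x - y) (x - y) <= R0.
    apply/ler_addgt0Pr => e e0.
    have T0 : 0 < 4 * (R0 + 1) / e by rewrite divr_gt0 //; lra.
    set T := 4 * (R0 + 1) / e in T0.
    have TE : T * e = 4 * (R0 + 1) by rewrite /T divfK // gt_eqF.
    have dl0 : 0 < e / (4 * (T + 1)) by rewrite divr_gt0 //; lra.
    set dl := e / (4 * (T + 1)) in dl0.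
    have dlE : dl * (4 * (T + 1)) = e by rewrite /dl divfK // gt_eqF //; lra.
    have [k [_ hk]] := Hx dl dl0 0%N.
    rewrite d2_sym in hk.
    have -> : x - y = (x - p k) + (p k - y) by vec.
    rewrite d2D.
    have hw : T * (2 * edot (x - p k) (p k - y)) <=
        T ^+ 2 * edot (x - p k) (x - p k) + edot (p k - y) (p k - y).
      by rewrite mulrA (mulrC T); apply: amgm.
    have := arith1 e0 R00 T0 TE dlE (edot_ge0 _) (ltW hk) (edot_ge0 _) (pb k) hw.
    have := pb k; lra.
  have := proj_pyth cvD Hps (conj Dx Dx2).
  move=> h; apply/eqP; rewrite -subr_eq0; apply/eqP; apply: edot_eq0.
  apply/le_anti; rewrite edot_ge0 andbT; rewrite -/R0 in h; lra.
split.
  move=> x [phi [phiinc phicvg]]; apply: LP => d d0 N.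
  have [N0 HN0] := cvg_d2 phicvg d0.
  have phige : forall l, (l <= phi l)%N.
    by elim => // l IH; exact: leq_ltn_trans IH (phiinc l).
  exists (phi (maxn N N0)); split; first by apply: leq_trans (phige _); rewrite leq_maxl.
  by apply: HN0; rewrite leq_maxr.
move=> Hmono.
have [x Hx] := cluster_ex pb.
have xp := LP x Hx; rewrite xp in Hx.
have mono : forall k k', (k <= k')%N -> edot (p k - y) (p k - y) <= edot (p k' - y) (p k' - y).
  move=> k k' /subnKC <-; elim: (k' - k)%N => [|d IH]; first by rewrite addn0.
  apply: le_trans IH _; rewrite addnS -enorm_leE; exact: Hmono.
apply: d2_cvg => d d0.
have e0 : 0 < d / 2 by rewrite divr_gt0.
have T0 : 0 < 4 * (R0 + 1) / (d / 2) by rewrite divr_gt0 //; lra.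
set T := 4 * (R0 + 1) / (d / 2) in T0.
have TE : T * (d / 2) = 4 * (R0 + 1) by rewrite /T divfK // gt_eqF.
have dl0 : 0 < (d / 2) / (4 * (T + 1)) by rewrite divr_gt0 //; lra.
set dl := (d / 2) / (4 * (T + 1)) in dl0.
have dlE : dl * (4 * (T + 1)) = d / 2 by rewrite /dl divfK // gt_eqF //; lra.
have [K0 [_ hK]] := Hx dl dl0 0%N.
exists K0 => k hk.
have hpy := proj_pyth (cvC (ik k)) (HC (ik k)) (DC (ik k)).
have mon := mono K0 k hk.
rewrite -/(p k) -/R0 in hpy.
have eR0 : R0 = edot ((pstar - p K0) + (p K0 - y)) ((pstar - p K0) + (p K0 - y)).
  by rewrite /R0; congr edot; vec.
rewrite d2D in eR0.
rewrite d2_sym in hK.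
have hw : T * (2 * edot (pstar - p K0) (p K0 - y)) <=
    T ^+ 2 * edot (pstar - p K0) (pstar - p K0) + edot (p K0 - y) (p K0 - y).
  by rewrite mulrA (mulrC T); apply: amgm.
have := arith1 e0 R00 T0 TE dlE (edot_ge0 _) (ltW hK) (edot_ge0 _) (pb K0) hw.
move=> h; rewrite (d2_sym (p k)); have := d2_sym (p K0) pstar; lra.
Qed.
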